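(* Let $w>1$ and $W=\begin{bmatrix}1&w\\0&1\end{bmatrix}$, and suppose the first token is fixed at $(0,1)$. Define the second-token dynamics on $\mathbb{S}^1$ by $$x^{(t+1)}=\frac{\tfrac12(0,1)W+\tfrac12 x^{(t)}W}{\big\|\tfrac12(0,1)W+\tfrac12 x^{(t)}W\big\|_2}.$$ Then the arc $\{x\in\mathbb{S}^1: x_1\le -1/w\}$ is invariant, and if $x^{(0)}\in\mathbb{S}^1$ satisfies $x^{(0)}_1<-1/w$, then $x^{(t)}\to B=\big(-\tfrac1w,-\sqrt{1-\tfrac1{w^2}}\big)$ as $t\to\infty$. In particular, for such initial data the two tokens $(0,1)$ and $B$ are linearly independent in the limit. (This is the LayerNorm self-attention dynamics with $N=d=2$, causal mask, $W_Q=W_K=0$, so that the attention matrix is $\begin{bmatrix}1&0\\1/2&1/2\end{bmatrix}$, and $W_V=W$.)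
   Context: $\mathbb{S}^1$ is the unit circle in $\mathbb{R}^2$; vectors are row vectors multiplied on the right by $W$. *)

(* Defs.v *)
From HB Require Import structures.
From mathcomp Require Import all_boot all_order all_algebra.
From mathcomp Require Import all_classical all_reals all_analysis.
Set Implicit Arguments. Unset Strict Implicit. Unset Printing Implicit Defensive.
Import Order.TTheory GRing.Theory Num.Theory.
Local Open Scope ring_scope.

Section Defs.
Variable R : realType.

Definition Wmat (w : R) : 'M[R]_2 :=
  \matrix_(i < 2, j < 2)
    (if i == j then 1 else if (i == 0) && (j == 1) then w else 0).

Definition tok1 : 'rV[R]_2 := \row_(j < 2) (if j == 1 then 1 else 0).

Definition norm2 (v : 'rV[R]_2) : R := Num.sqrt (\sum_(i < 2) (v 0 i) ^+ 2).

Definition step (w : R) (x : 'rV[R]_2) : 'rV[R]_2 :=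
  let y := 2^-1 *: (tok1 *m Wmat w) + 2^-1 *: (x *m Wmat w) in
  (norm2 y)^-1 *: y.

Definition traj (w : R) (x0 : 'rV[R]_2) (t : nat) : 'rV[R]_2 := iter t (step w) x0.

Definition Bpt (w : R) : 'rV[R]_2 :=
  \row_(j < 2) (if j == 0 then - (1 / w) else - Num.sqrt (1 - 1 / w ^+ 2)).

End Defs.

(* Main.v *)
Require Import Defs.
From HB Require Import structures.
From mathcomp Require Import all_boot all_order all_algebra.
From mathcomp Require Import all_classical all_reals all_analysis.
From mathcomp Require Import ring lra.
Import Order.TTheory GRing.Theory Num.Theory.
Import numFieldNormedType.Exports.
Local Open Scope classical_set_scope.
Local Open Scope ring_scope.

Section Aux.
Variable R : realType.

Lemma norm2E (x : 'rV[R]_2) : norm2 x = Num.sqrt (x 0 0 ^+ 2 + x 0 1 ^+ 2).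
Proof.
rewrite /norm2 !big_ord_recr big_ord0 /= add0r.
by congr (Num.sqrt (x 0 _ ^+ 2 + x 0 _ ^+ 2)); apply: val_inj.
Qed.

Lemma norm2_1 (x : 'rV[R]_2) : norm2 x = 1 -> x 0 0 ^+ 2 + x 0 1 ^+ 2 = 1.
Proof.
rewrite norm2E => h.
have h0 : 0 <= x 0 0 ^+ 2 + x 0 1 ^+ 2 by rewrite addr_ge0 // sqr_ge0.
by rewrite -(sqr_sqrtr h0) h expr1n.
Qed.

Definition nn (w : R) (x : 'rV[R]_2) : R :=
  Num.sqrt ((x 0 0 / 2) ^+ 2 + ((w * x 0 0 + x 0 1 + 1) / 2) ^+ 2).

Lemma stepE (w : R) (x : 'rV[R]_2) :
  (step w x) 0 0 = (nn w x)^-1 * (x 0 0 / 2) /\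
  (step w x) 0 1 = (nn w x)^-1 * ((w * x 0 0 + x 0 1 + 1) / 2).
Proof.
have yE : forall j, (2^-1 *: (tok1 R *m Wmat w) + 2^-1 *: (x *m Wmat w)) 0 j =
   if j == 0 then x 0 0 / 2 else (w * x 0 0 + x 0 1 + 1) / 2.
  move=> j; rewrite !mxE !big_ord_recr /= !big_ord0 !mxE /=.
  have e0 : (widen_ord (leqnSn 1) ord_max : 'I_2) = 0 by apply: val_inj.
  have e1 : (ord_max : 'I_2) = 1 by apply: val_inj.
  by case: j => [[|[|j]] hj] //=; rewrite e0 e1; ring.
have sc : forall k (y : 'rV[R]_2) j, (k *: y) 0 j = k * y 0 j by move=> *; rewrite mxE.
by rewrite /step /= !sc norm2E !yE /=.
Qed.

Lemma key (w a b : R) : 1 < w -> a ^+ 2 + b ^+ 2 = 1 -> w * a <= -1 ->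
  let c := w * a + b + 1 in
  let n := Num.sqrt ((a / 2) ^+ 2 + (c / 2) ^+ 2) in
  (0 < n) /\ ((n^-1 * (a / 2)) ^+ 2 + (n^-1 * (c / 2)) ^+ 2 = 1) /\
  (w * (n^-1 * (a / 2)) <= -1) /\
  (w * a < -1 -> w * (n^-1 * (a / 2)) < -1 /\ n^-1 * (c / 2) < b).
Proof.
move=> hw hab hwa c n.
have ha : a < 0 by nra.
have hS : 0 < (a / 2) ^+ 2 + (c / 2) ^+ 2.
  have h2 : a / 2 < 0 by lra.
  have : 0 < (a / 2) ^+ 2 by rewrite expr2 nmulr_rgt0.
  have : 0 <= (c / 2) ^+ 2 by rewrite sqr_ge0.
  lra.
have hn : 0 < n by rewrite /n sqrtr_gt0.
have hn2 : n ^+ 2 = (a / 2) ^+ 2 + (c / 2) ^+ 2 by rewrite /n sqr_sqrtr // ltW.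
set p := n^-1 * (a / 2); set q := n^-1 * (c / 2).
have hn0 : n != 0 by rewrite gt_eqF.
have hpn : p * n = a / 2 by rewrite /p mulrC mulrA divff // mul1r.
have hqn : q * n = c / 2 by rewrite /q mulrC mulrA divff // mul1r.
have hpq : p ^+ 2 + q ^+ 2 = 1.
  have h : (p ^+ 2 + q ^+ 2) * n ^+ 2 = 1 * n ^+ 2.
    by rewrite mul1r [in RHS]hn2 -hpn -hqn; ring.
  by apply: (mulIf _ h); rewrite expf_neq0.
have hb : -1 <= b by nra.
have hsq : n ^+ 2 <= (w * a / 2) ^+ 2.
  rewrite hn2 /c.
  have : 0 <= (1 + b) * (- 2 * w * a - 2) by apply: mulr_ge0; lra.
  nra.
have hnle : n <= - (w * a / 2) by nra.
have hwp : w * p <= -1.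
  have : (w * p + 1) * n <= 0 by rewrite mulrDl mul1r -mulrA hpn; lra.
  nra.
split => //; split => //; split => // hwa'.
have hb' : -1 < b by nra.
have hsq' : n ^+ 2 < (w * a / 2) ^+ 2.
  rewrite hn2 /c.
  have : 0 < (1 + b) * (- 2 * w * a - 2) by apply: mulr_gt0; lra.
  nra.
have hnlt : n < - (w * a / 2) by nra.
split.
  have : (w * p + 1) * n < 0 by rewrite mulrDl mul1r -mulrA hpn; lra.
  nra.
have hp : p < 0 by nra.
have hcross : 0 < a * q - b * p.
  have : (a * q - b * p) * n = a * (w * a + 1) / 2.
    by rewrite mulrBl -(mulrA a q n) -(mulrA b p n) hqn hpn /c; ring.
  move=> hX.
  have hY : 0 < a * (w * a + 1) / 2 by nra.
  rewrite -hX in hY.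
  rewrite pmulr_lgt0 // in hY.
have hE : (q - b) * ((a + p) ^+ 2 + (b + q) ^+ 2) = 2 * (a * q - b * p) * (a + p).
  have e : (q - b) * ((a + p) ^+ 2 + (b + q) ^+ 2) - 2 * (a * q - b * p) * (a + p)
     = (q - b) * (a ^+ 2 + b ^+ 2 - 1) + (q - b) * (p ^+ 2 + q ^+ 2 - 1)
       + 2 * b * (p ^+ 2 + q ^+ 2 - 1) - 2 * q * (a ^+ 2 + b ^+ 2 - 1) by ring.
  move: e; rewrite hab hpq subrr !mulr0 !addr0 subr0 => /eqP; rewrite subr_eq0 => /eqP.
  done.
have : 2 * (a * q - b * p) * (a + p) < 0 by nra.
rewrite -hE => h.
have : 0 <= (a + p) ^+ 2 + (b + q) ^+ 2 by rewrite addr_ge0 // sqr_ge0.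
nra.
Qed.

Lemma inv1 (w : R) (x : 'rV[R]_2) : 1 < w -> norm2 x = 1 -> w * x 0 0 <= -1 ->
  norm2 (step w x) = 1 /\ w * (step w x) 0 0 <= -1 /\
  (w * x 0 0 < -1 -> w * (step w x) 0 0 < -1 /\ (step w x) 0 1 < x 0 1).
Proof.
move=> hw hx hwa.
have hab := norm2_1 _ hx.
have [E0 E1] := stepE w x.
have [hn [hpq [hwp hs]]] := key _ _ _ hw hab hwa.
rewrite norm2E E0 E1.
split; first by rewrite /nn hpq sqrtr1.
by split.
Qed.

Lemma divle (w a : R) : 0 < w -> (a <= - (1 / w)) = (w * a <= -1).
Proof.
move=> hw; have hi : w * (1 / w) = 1 by rewrite mul1r divff // gt_eqF.
have hi0 : 0 < 1 / w by rewrite divr_gt0.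
apply/idP/idP => h; nra.
Qed.

Lemma divlt (w a : R) : 0 < w -> (a < - (1 / w)) = (w * a < -1).
Proof.
move=> hw; have hi : w * (1 / w) = 1 by rewrite mul1r divff // gt_eqF.
have hi0 : 0 < 1 / w by rewrite divr_gt0.
apply/idP/idP => h; nra.
Qed.
End Aux.

Theorem mainTheorem13 (R : realType) (w : R) (hw : 1 < w) :
  (* the arc {x in S^1 : x_1 <= -1/w} is invariant under the dynamics *)
  (forall x : 'rV[R]_2, norm2 x = 1 -> x 0 0 <= - (1 / w) ->
     norm2 (step w x) = 1 /\ (step w x) 0 0 <= - (1 / w)) /\
  (* convergence to B from the open arc *)
  (forall x0 : 'rV[R]_2, norm2 x0 = 1 -> x0 0 0 < - (1 / w) ->
     traj w x0 t @[t --> \oo] --> Bpt w) /\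
  (* the limiting tokens (0,1) and B are linearly independent *)
  \det (col_mx (tok1 R) (Bpt w)) != 0.
Proof.
have hw0 : 0 < w by lra.
split.
  move=> x hx; rewrite !divle // => h.
  by have [? [? _]] := inv1 _ _ _ hw hx h.
split; last first.
  have c0 : forall j, col_mx (tok1 R) (Bpt w) 0 j = tok1 R 0 j.
    by move=> j; rewrite (_ : (0 : 'I_2) = lshift 1 (0 : 'I_1)) ?col_mxEu //; apply: val_inj.
  have c1 : forall j, col_mx (tok1 R) (Bpt w) (lift 0 0) j = Bpt w 0 j.
    by move=> j; rewrite (_ : (lift 0 0 : 'I_2) = rshift 1 (0 : 'I_1)) ?col_mxEd //; apply: val_inj.
  rewrite (expand_det_row _ 0) !big_ord_recr big_ord0 /= /cofactor !det_mx11.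
  have e0 : (widen_ord (leqnSn 1) ord_max : 'I_2) = 0 by apply: val_inj.
  have e1 : (ord_max : 'I_2) = 1 by apply: val_inj.
  have rc : forall (A : 'M[R]_2) (j : 'I_2), row' 0 (col' j A) 0 0 = A (lift 0 0) (lift j 0).
    by move=> A j; rewrite !mxE.
  rewrite !c0 e0 e1 !rc !c1 !mxE /=.
  rewrite mul0r add0r mul1r (_ : (0 + 1 %% 2)%N = 1%N) // expr1 mulN1r opprK.
  by rewrite add0r div1r invr_eq0 gt_eqF.
move=> x0 hx0; rewrite divlt // => h0.
pose u := traj w x0.
have uS : forall t, u t.+1 = step w (u t) by [].
have H : forall t, norm2 (u t) = 1 /\ w * u t 0 0 < -1.
  elim=> [|t [h1 h2]]; first by split.
  rewrite uS; have [a1 [a2 a3]] := inv1 _ _ _ hw h1 (ltW h2).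
  by have [b1 _] := a3 h2; split.
have dec : forall t, u t.+1 0 1 < u t 0 1.
  move=> t; have [h1 h2] := H t; have [_ [_ a3]] := inv1 _ _ _ hw h1 (ltW h2).
  by rewrite uS; exact: (a3 h2).2.
pose a := fun t => u t 0 0.
pose b := fun t => u t 0 1.
have sq : forall t, a t ^+ 2 + b t ^+ 2 = 1 := fun t => norm2_1 _ _ (H t).1.
have bdec : {homo b : n m / (n <= m)%N >-> m <= n}.
  have k : forall n k, b (n + k)%N <= b n.
    move=> n; elim=> [|k IH]; first by rewrite addn0.
    rewrite addnS; apply: le_trans IH; exact: ltW (dec _).
  by move=> n m /subnKC <-; exact: k.
have blb : has_lbound (range b).
  by exists (-1) => y [t _ <-]; have := sq t; nra.
have cb : cvgn b := nonincreasing_is_cvgn bdec blb.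
pose L := limn b.
have hbL : b @ \oo --> L := cb.
have hLb : forall n, L <= b n := nonincreasing_cvgn_ge bdec cb.
have hL1 : -1 <= L.
  apply: limr_ge => //; apply: nearW => t; have := sq t; nra.
have haE : a = fun t => - Num.sqrt (1 - b t ^+ 2).
  apply: funext => t; have hat : a t < 0 by have := (H t).2; rewrite /a; nra.
  rewrite (_ : 1 - b t ^+ 2 = a t ^+ 2); last by have := sq t; lra.
  by rewrite sqrtr_sqr ltr0_norm ?opprK.
have hb2 : (fun t => b t ^+ 2) @ \oo --> L ^+ 2.
  rewrite expr2 (_ : (fun t => b t ^+ 2) = b \* b); first exact: cvgM.
  by apply: funext => t; rewrite expr2.
have h1 : (fun t => 1 - b t ^+ 2) @ \oo --> 1 - L ^+ 2.
  by apply: cvgB => //; exact: cvg_cst.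
have h2 : (fun t => Num.sqrt (1 - b t ^+ 2)) @ \oo --> Num.sqrt (1 - L ^+ 2).
  by apply: continuous_cvg; [exact: sqrt_continuous | exact: h1].
pose A := - Num.sqrt (1 - L ^+ 2).
have ha : a @ \oo --> A by rewrite haE; exact: cvgN h2.
have haS : (fun t => a t.+1) @ \oo --> A by rewrite cvg_shiftS.
have hbS : (fun t => b t.+1) @ \oo --> L by rewrite cvg_shiftS.
have rel : forall t, a t.+1 * (w * a t + b t + 1) - b t.+1 * a t = 0.
  move=> t; rewrite /a /b uS; have [E0 E1] := stepE _ w (u t); rewrite E0 E1; ring.
have hlim : (fun t => a t.+1 * (w * a t + b t + 1) - b t.+1 * a t) @ \oo -->
    A * (w * A + L + 1) - L * A.
  apply: cvgB; apply: cvgM => //; apply: cvgD; last exact: cvg_cst.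
  by apply: cvgD => //; apply: cvgM => //; exact: cvg_cst.
have hfix : A * (w * A + L + 1) - L * A = 0.
  have hz : (fun t => a t.+1 * (w * a t + b t + 1) - b t.+1 * a t) = fun=> 0.
    by apply: funext => t; exact: rel.
  rewrite hz in hlim.
  have e1 := cvg_lim (@Rhausdorff R) hlim.
  by rewrite (lim_cst (@Rhausdorff R)) in e1; rewrite -e1 //; exact: _.
have hA : w * A <= -1.
  have hwa : (fun t => w * a t) @ \oo --> w * A by apply: cvgM => //; exact: cvg_cst.
  rewrite -(cvg_lim (@Rhausdorff R) hwa); apply: limr_le; first exact: cvgP hwa.
  by apply: nearW => t; exact: ltW (H t).2.
have hA0 : A < 0 by nra.
have hwA : w * A = -1.
  have : A * (w * A + 1) = 0 by rewrite -hfix; ring.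
  move/eqP; rewrite mulf_eq0 => /orP [/eqP hA0' | /eqP]; first by move: hA0; rewrite hA0' ltxx.
  by move=> e; lra.
have hi : w * (1 / w) = 1 by rewrite mul1r divff // gt_eqF.
have hAw : A = - (1 / w).
  by apply: (mulfI (negbT (gt_eqF hw0))); rewrite hwA mulrN hi.
have hA2 : A ^+ 2 = 1 - L ^+ 2.
  rewrite /A sqrrN sqr_sqrtr //; have := sq 0%N; have := hLb 0%N => h3 h4.
  have hb0 : b 0%N <= 1 by nra.
  have : L <= 1 by lra.
  nra.
have hL2 : 1 - 1 / w ^+ 2 = L ^+ 2.
  rewrite (_ : 1 / w ^+ 2 = A ^+ 2); first by rewrite hA2; ring.
  by rewrite hAw sqrrN expr_div_n expr1n.
have ha0 : a 0%N < A by have := (H 0%N).2; rewrite /a; nra.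
have hL0 : L < 0.
  have := sq 0%N; have := hLb 0%N; nra.
have hLs : L = - Num.sqrt (1 - 1 / w ^+ 2).
  by rewrite hL2 sqrtr_sqr ltr0_norm ?opprK.
rewrite hAw in ha; rewrite hLs in hbL.
apply/cvg_mx_entourageP => E entE.
have na := (cvg_entourageP _ _).1 ha E entE.
have nb := (cvg_entourageP _ _).1 hbL E entE.
near=> t => i j; rewrite [i]ord1.
case: j => [[|[|j]] hj] //.
  have -> : (Ordinal hj : 'I_2) = 0 by apply: val_inj.
  rewrite mxE /=; apply/mem_set; near: t; exact: na.
have -> : (Ordinal hj : 'I_2) = 1 by apply: val_inj.
rewrite mxE /=; apply/mem_set; near: t; exact: nb.
Unshelve. all: end_near.
Qed.
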